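(* Let $n\in\mathbb{N}$, $a<b$, and let $f\colon[a,b]\to\mathbb{R}$ be such that the pointwise derivative $f^{(n-1)}$ exists and is continuous on $[a,b]$. Then the distributional derivative $f^{(n)}$ belongs to $\mathcal{A}_c$. Define $E_n(f)$ by $$\int_a^b f(x)\,dx = \frac{1}{(n-1)!}\sum_{k=0}^{n-2}\left[\frac{(b-a)^{k+1}(2n-k-2)!\,(n-k-1)!}{2^{2k+1}(2n-2k-2)!\,(k+1)!}\right]\left[f^{(k)}(a)+(-1)^{k}f^{(k)}(b)\right]+R_n+E_n(f),$$ where $R_n=\frac{(b-a)^nf^{(n-1)}(a)}{n!\,2^{2n-2}}$ if $n$ is odd and $R_n=0$ if $n$ is even. Then $$|E_n(f)|\leq \frac{\|f^{(n)}\|\,(b-a)^{n}}{(n-1)!\,2^{2n-2}},$$ and this estimate is sharp in the sense that the coefficient of $\|f^{(n)}\|$ cannot be reduced.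
   Context: $\mathcal{A}_c$ is the space of Schwartz distributions $g$ on $(a,b)$ that are the distributional derivative $g=G'$ of some $G\in C([a,b])$ with $G(a)=0$ (i.e. $\langle G',\psi\rangle=-\int_a^bG\psi'$ for all $\psi\in C_c^\infty((a,b))$); the integral is defined by $\int_a^x g=G(x)$ (continuous primitive integral). The Alexiewicz norm is $\|g\|=\sup_{a\le x\le b}|\int_a^x g|=\|G\|_\infty$. In particular $\|f^{(n)}\|=\sup_{a\le x\le b}|f^{(n-1)}(x)-f^{(n-1)}(a)|$. *)

(* Defs.v *)
From Stdlib Require Import Reals List Lra Arith.
From Coquelicot Require Import Coquelicot.
Open Scope R_scope.

Definition Icc (a b : R) (x : R) : Prop := a <= x <= b.

Definition deriv_on (a b : R) (F G : R -> R) : Prop :=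
  forall x, Icc a b x ->
    filterlim (fun y => (F y - F x) / (y - x))
      (within (fun y => Icc a b y /\ y <> x) (locally x)) (locally (G x)).

Definition cont_on (a b : R) (F : R -> R) : Prop :=
  forall x, Icc a b x -> filterlim F (within (Icc a b) (locally x)) (locally (F x)).

Definition derivs_hyp (n : nat) (a b : R) (f : R -> R) (D : nat -> R -> R) : Prop :=
  (forall x, Icc a b x -> D 0%nat x = f x) /\
  (forall k, (k < n - 1)%nat -> deriv_on a b (D k) (D (S k))) /\
  cont_on a b (D (n - 1)%nat).

Definition test_fun (a b : R) (psi : R -> R) : Prop :=
  (forall k x, ex_derive_n psi k x) /\
  exists c d, a < c /\ c <= d /\ d < b /\ forall x, (x < c \/ d < x) -> psi x = 0.

Definition distr_deriv (n : nat) (a b : R) (f : R -> R) : (R -> R) -> R :=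
  fun psi => (-1) ^ n * RInt (fun x => f x * Derive_n psi n x) a b.

(* the distribution T belongs to A_c: T = G' with G in C([a,b]), G(a) = 0 *)
Definition in_Ac (a b : R) (T : (R -> R) -> R) : Prop :=
  exists G : R -> R, cont_on a b G /\ G a = 0 /\
    forall psi, test_fun a b psi -> T psi = - RInt (fun x => G x * Derive psi x) a b.

Definition sup_norm (a b : R) (G : R -> R) : R :=
  real (Lub_Rbar (fun y => exists x, Icc a b x /\ y = Rabs (G x))).

(* Alexiewicz norm ||f^{(n)}|| = sup_{a<=x<=b} |f^{(n-1)}(x) - f^{(n-1)}(a)| *)
Definition alex_norm_deriv (n : nat) (a b : R) (D : nat -> R -> R) : R :=
  sup_norm a b (fun x => D (n - 1)%nat x - D (n - 1)%nat a).

Definition sum_range (m : nat) (g : nat -> R) : R :=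
  fold_right Rplus 0 (map g (seq 0 m)).

Definition coef (n : nat) (a b : R) (k : nat) : R :=
  ((b - a) ^ (k + 1) * INR (fact (2 * n - k - 2)) * INR (fact (n - k - 1))) /
  (2 ^ (2 * k + 1) * INR (fact (2 * n - 2 * k - 2)) * INR (fact (k + 1))).

Definition Rterm (n : nat) (a b : R) (D : nat -> R -> R) : R :=
  if Nat.odd n then (b - a) ^ n * D (n - 1)%nat a / (INR (fact n) * 2 ^ (2 * n - 2))
  else 0.

Definition En (n : nat) (a b : R) (f : R -> R) (D : nat -> R -> R) : R :=
  RInt f a b
  - (1 / INR (fact (n - 1))) *
      sum_range (n - 1) (fun k => coef n a b k * (D k a + (-1) ^ k * D k b))
  - Rterm n a b D.

Definition Kn (n : nat) (a b : R) : R :=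
  (b - a) ^ n / (INR (fact (n - 1)) * 2 ^ (2 * n - 2)).

(* Main.v *)
Require Import Defs.
From Stdlib Require Import Reals Lra Lia List Arith.
From Coquelicot Require Import Coquelicot.
Open Scope R_scope.

Lemma ball_R (x d y : R) : ball x d y <-> Rabs (y - x) < d.
Proof. unfold ball; simpl; unfold AbsRing_ball, abs, minus, plus, opp; simpl. tauto. Qed.

Lemma cont_eps (f : R -> R) x :
  (forall eps, 0 < eps -> exists d, 0 < d /\ forall y, Rabs (y - x) < d -> Rabs (f y - f x) < eps)
  -> continuous f x.
Proof.
  intros H P [e He]. destruct (H e (cond_pos e)) as [d [Hd Hy]].
  exists (mkposreal d Hd). intros y Hy'. apply He. apply ball_R. apply Hy. apply ball_R. exact Hy'.
Qed.

Lemma eps_cont (f : R -> R) x : continuous f x ->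
  forall eps, 0 < eps -> exists d, 0 < d /\ forall y, Rabs (y - x) < d -> Rabs (f y - f x) < eps.
Proof.
  intros H eps He. destruct (H (ball (f x) (mkposreal eps He)) (locally_ball _ _)) as [d Hd].
  exists d. split. apply cond_pos. intros y Hy. apply ball_R. apply Hd. apply ball_R. exact Hy.
Qed.

Lemma cont_on_eps a b F : cont_on a b F -> forall x, Icc a b x ->
  forall eps, 0 < eps -> exists d, 0 < d /\ forall y, Icc a b y -> Rabs (y - x) < d -> Rabs (F y - F x) < eps.
Proof.
  intros H x Hx eps He.
  destruct (H x Hx (ball (F x) (mkposreal eps He)) (locally_ball _ _)) as [d Hd].
  exists d. split. apply cond_pos. intros y Hy Hyx. apply ball_R. apply Hd. apply ball_R. exact Hyx. exact Hy.
Qed.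

Lemma eps_cont_on a b F : (forall x, Icc a b x ->
  forall eps, 0 < eps -> exists d, 0 < d /\ forall y, Icc a b y -> Rabs (y - x) < d -> Rabs (F y - F x) < eps)
  -> cont_on a b F.
Proof.
  intros H x Hx P [e He]. destruct (H x Hx e (cond_pos e)) as [d [Hd Hy]].
  exists (mkposreal d Hd). intros y Hy' Hi. apply He. apply ball_R. apply Hy. exact Hi. apply ball_R. exact Hy'.
Qed.

Definition clamp (a b x : R) := Rmax a (Rmin b x).

Lemma clamp_Icc a b x : a <= b -> Icc a b (clamp a b x).
Proof. intros. unfold Icc, clamp. unfold Rmax, Rmin. repeat destruct Rle_dec; lra. Qed.

Lemma clamp_id a b x : Icc a b x -> clamp a b x = x.
Proof. unfold Icc, clamp, Rmax, Rmin. intros. repeat destruct Rle_dec; lra. Qed.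

Lemma clamp_lip a b x y : a <= b -> Rabs (clamp a b y - clamp a b x) <= Rabs (y - x).
Proof. intros. unfold clamp, Rmax, Rmin. repeat destruct Rle_dec; unfold Rabs; repeat destruct Rcase_abs; lra. Qed.

Lemma cont_on_clamp a b F : a <= b -> cont_on a b F -> forall x, continuous (fun y => F (clamp a b y)) x.
Proof.
  intros Hab H x. apply cont_eps. intros eps He.
  destruct (cont_on_eps a b F H (clamp a b x) (clamp_Icc a b x Hab) eps He) as [d [Hd Hy]].
  exists d. split. exact Hd. intros y Hyx. apply Hy. apply clamp_Icc; auto.
  eapply Rle_lt_trans. apply clamp_lip; auto. exact Hyx.
Qed.

Lemma cont_cont_on a b F : (forall x, continuous F x) -> cont_on a b F.
Proof.
  intros H. apply eps_cont_on. intros x _ eps He. destruct (eps_cont F x (H x) eps He) as [d [Hd Hy]].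
  exists d. split; auto.
Qed.

Lemma deriv_on_eps a b F G : deriv_on a b F G -> forall x, Icc a b x ->
  forall eps, 0 < eps -> exists d, 0 < d /\ forall y, Icc a b y -> y <> x -> Rabs (y - x) < d ->
   Rabs ((F y - F x) / (y - x) - G x) < eps.
Proof.
  intros H x Hx eps He.
  destruct (H x Hx (ball (G x) (mkposreal eps He)) (locally_ball _ _)) as [d Hd].
  exists d. split. apply cond_pos. intros y Hy Hne Hyx. apply ball_R. apply Hd. apply ball_R. exact Hyx. split; auto.
Qed.

Lemma deriv_on_cont a b F G : deriv_on a b F G -> cont_on a b F.
Proof.
  intros H. apply eps_cont_on. intros x Hx eps He.
  destruct (deriv_on_eps a b F G H x Hx 1 Rlt_0_1) as [d [Hd Hy]].
  exists (Rmin d (eps / (Rabs (G x) + 1))). split.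
  { apply Rmin_pos; auto. apply Rdiv_lt_0_compat; auto. pose proof (Rabs_pos (G x)); lra. }
  intros y Hyi Hyx.
  destruct (Req_dec y x) as [->|Hne]. { rewrite Rminus_eq_0, Rabs_R0. auto. }
  assert (Hq := Hy y Hyi Hne (Rlt_le_trans _ _ _ Hyx (Rmin_l _ _))).
  assert (Hyx0 : y - x <> 0) by lra.
  replace (F y - F x) with ((F y - F x) / (y - x) * (y - x)) by (field; auto).
  rewrite Rabs_mult.
  assert (Rabs ((F y - F x) / (y - x)) < Rabs (G x) + 1).
  { replace ((F y - F x) / (y - x)) with (((F y - F x) / (y - x) - G x) + G x) by ring.
    eapply Rle_lt_trans. apply Rabs_triang. lra. }
  assert (Hm : Rabs (y - x) < eps / (Rabs (G x) + 1)) by (eapply Rlt_le_trans; [exact Hyx| apply Rmin_r]).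
  pose proof (Rabs_pos (G x)).
  apply Rle_lt_trans with ((Rabs (G x) + 1) * Rabs (y - x)).
  apply Rmult_le_compat_r. apply Rabs_pos. lra.
  apply Rmult_lt_reg_l with (/ (Rabs (G x) + 1)). apply Rinv_0_lt_compat; lra.
  replace (/ (Rabs (G x) + 1) * ((Rabs (G x) + 1) * Rabs (y - x))) with (Rabs (y - x)) by (field; lra).
  replace (/ (Rabs (G x) + 1) * eps) with (eps / (Rabs (G x) + 1)) by (field; lra). exact Hm.
Qed.

Lemma deriv_on_interior a b F G x : deriv_on a b F G -> a < x < b -> is_derive F x (G x).
Proof.
  intros H Hx. apply is_derive_Reals. intros eps He.
  destruct (deriv_on_eps a b F G H x ltac:(unfold Icc; lra) eps He) as [d [Hd Hy]].
  assert (Hp : 0 < Rmin d (Rmin (x - a) (b - x))) by (repeat apply Rmin_pos; lra).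
  exists (mkposreal _ Hp). intros h Hh Hhd. simpl in Hhd.
  assert (Rabs h < d) by (eapply Rlt_le_trans; [exact Hhd| apply Rmin_l]).
  assert (Rabs h < Rmin (x - a) (b - x)) by (eapply Rlt_le_trans; [exact Hhd| apply Rmin_r]).
  assert (Rabs h < x - a) by (apply Rlt_le_trans with (Rmin (x - a) (b - x)); [exact H1| apply Rmin_l]).
  assert (Rabs h < b - x) by (apply Rlt_le_trans with (Rmin (x - a) (b - x)); [exact H1| apply Rmin_r]).
  assert (HI : Icc a b (x + h)) by (unfold Icc; unfold Rabs in *; destruct Rcase_abs; lra).
  specialize (Hy (x + h) HI ltac:(lra)). replace (x + h - x) with h in Hy by ring. apply Hy. auto.
Qed.

Lemma is_derive_deriv_on a b F G : (forall x, Icc a b x -> is_derive F x (G x)) -> deriv_on a b F G.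
Proof.
  intros H x Hx P [e He]. simpl in *.
  pose proof (proj1 (is_derive_Reals F x (G x)) (H x Hx) e (cond_pos e)) as [d Hd].
  exists d. intros y Hy [_ Hne]. change R in y. apply He. apply ball_R.
  assert (Hyx : (y:R) - x <> 0) by (intro; apply Hne; lra).
  specialize (Hd (y - x) Hyx). replace (x + (y - x)) with (y:R) in Hd by ring. apply Hd.
  apply ball_R in Hy. exact Hy.
Qed.

Lemma small_zero (x : R) : (forall eps, 0 < eps -> Rabs x < eps) -> x = 0.
Proof.
  intros H. destruct (Req_dec x 0); auto. exfalso.
  specialize (H (Rabs x) (Rabs_pos_lt _ H0)). lra.
Qed.

Lemma RInt_cont_fun (g : R -> R) (c : R) : (forall x, continuous g x) ->
  forall x, continuous (fun y => RInt g c y) x.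
Proof.
  intros Hg x. apply continuous_RInt_1 with (f := g) (a := c).
  exists (mkposreal 1 Rlt_0_1). intros z _. apply (RInt_correct (V := R_CompleteNormedModule)).
  apply (ex_RInt_continuous (V := R_CompleteNormedModule)). intros; apply Hg.
Qed.

Lemma Icc_ext_RInt a b (G : R -> R) u v : a <= u -> u <= v -> v <= b ->
  RInt G u v = RInt (fun y => G (clamp a b y)) u v.
Proof.
  intros. apply RInt_ext. intros x Hx. rewrite Rmin_left in Hx by lra. rewrite Rmax_right in Hx by lra.
  rewrite clamp_id; auto. unfold Icc; lra.
Qed.

Lemma ftc_gen a b (F G : R -> R) : a < b -> cont_on a b F -> cont_on a b G ->
  (forall x, a < x < b -> is_derive F x (G x)) -> ex_RInt G a b /\ RInt G a b = F b - F a.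
Proof.
  intros Hab HF HG Hd.
  set (Fc := fun y => F (clamp a b y)). set (Gc := fun y => G (clamp a b y)).
  assert (HFc : forall x, continuous Fc x) by (apply cont_on_clamp; auto; lra).
  assert (HGc : forall x, continuous Gc x) by (apply cont_on_clamp; auto; lra).
  assert (exG : forall u v, ex_RInt Gc u v) by (intros; apply (ex_RInt_continuous (V := R_CompleteNormedModule)); intros; apply HGc).
  split.
  { apply ex_RInt_ext with Gc. intros x Hx. rewrite Rmin_left in Hx by lra. rewrite Rmax_right in Hx by lra.
    unfold Gc. rewrite clamp_id; auto. unfold Icc; lra. apply exG. }
  set (H := fun x => RInt Gc 0 x).
  assert (HH : forall x, continuous H x) by (apply RInt_cont_fun; auto).
  assert (Hch : forall u v, RInt Gc u v = H v - H u).
  { intros. unfold H. assert (E := RInt_Chasles Gc 0 u v (exG _ _) (exG _ _)).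
    assert (E' : @eq R (RInt Gc 0 u + RInt Gc u v) (RInt Gc 0 v)) by exact E. lra. }
  assert (Hint : forall u v, a < u -> u <= v -> v < b -> F v - F u = RInt Gc u v).
  { intros u v Hu Huv Hv. unfold Gc. rewrite <- (Icc_ext_RInt a b G u v) by lra. symmetry. apply is_RInt_unique.
    apply (is_RInt_derive F G u v).
    - intros x Hx. rewrite Rmin_left in Hx by lra. rewrite Rmax_right in Hx by lra. apply Hd; lra.
    - intros x Hx. rewrite Rmin_left in Hx by lra. rewrite Rmax_right in Hx by lra.
      apply continuous_ext_loc with Gc.
      + assert (Hp : 0 < Rmin (x - a) (b - x)) by (apply Rmin_pos; lra).
        exists (mkposreal _ Hp). intros y Hy. apply ball_R in Hy. simpl in Hy. unfold Gc. rewrite clamp_id; auto.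
        assert (Rabs (y - x) < x - a) by (eapply Rlt_le_trans; [exact Hy| apply Rmin_l]).
        assert (Rabs (y - x) < b - x) by (eapply Rlt_le_trans; [exact Hy| apply Rmin_r]).
        unfold Icc. unfold Rabs in *; destruct Rcase_abs; lra.
      + apply HGc. }
  rewrite (Icc_ext_RInt a b G a b) by lra. fold Gc. rewrite Hch.
  assert (Fa : F a = Fc a) by (unfold Fc; rewrite clamp_id; auto; unfold Icc; lra).
  assert (Fb : F b = Fc b) by (unfold Fc; rewrite clamp_id; auto; unfold Icc; lra).
  rewrite Fa, Fb.
  cut (Fc b - Fc a - (H b - H a) = 0). lra.
  apply small_zero. intros eps He.
  assert (He4 : 0 < eps / 4) by lra.
  destruct (eps_cont Fc a (HFc a) _ He4) as [d1 [Hd1 H1]].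
  destruct (eps_cont Fc b (HFc b) _ He4) as [d2 [Hd2 H2]].
  destruct (eps_cont H a (HH a) _ He4) as [d3 [Hd3 H3]].
  destruct (eps_cont H b (HH b) _ He4) as [d4 [Hd4 H4]].
  set (s := Rmin (Rmin (Rmin d1 d2) (Rmin d3 d4)) ((b - a) / 4) / 2).
  assert (Hs0 : 0 < s).
  { unfold s. apply Rdiv_lt_0_compat; [|lra]. repeat apply Rmin_pos; lra. }
  assert (Hsm : 2 * s <= Rmin (Rmin (Rmin d1 d2) (Rmin d3 d4)) ((b - a) / 4)) by (unfold s; lra).
  assert (Hs1 : s < d1). { pose proof (Rmin_l (Rmin (Rmin d1 d2) (Rmin d3 d4)) ((b - a) / 4)).
    pose proof (Rmin_l (Rmin d1 d2) (Rmin d3 d4)). pose proof (Rmin_l d1 d2). lra. }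
  assert (Hs2 : s < d2). { pose proof (Rmin_l (Rmin (Rmin d1 d2) (Rmin d3 d4)) ((b - a) / 4)).
    pose proof (Rmin_l (Rmin d1 d2) (Rmin d3 d4)). pose proof (Rmin_r d1 d2). lra. }
  assert (Hs3 : s < d3). { pose proof (Rmin_l (Rmin (Rmin d1 d2) (Rmin d3 d4)) ((b - a) / 4)).
    pose proof (Rmin_r (Rmin d1 d2) (Rmin d3 d4)). pose proof (Rmin_l d3 d4). lra. }
  assert (Hs4 : s < d4). { pose proof (Rmin_l (Rmin (Rmin d1 d2) (Rmin d3 d4)) ((b - a) / 4)).
    pose proof (Rmin_r (Rmin d1 d2) (Rmin d3 d4)). pose proof (Rmin_r d3 d4). lra. }
  assert (Hs5 : s < (b - a) / 4). { pose proof (Rmin_r (Rmin (Rmin d1 d2) (Rmin d3 d4)) ((b - a) / 4)). lra. }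
  assert (Z : Fc (b - s) - Fc (a + s) - (H (b - s) - H (a + s)) = 0).
  { rewrite <- Hch. unfold Fc. rewrite !clamp_id by (unfold Icc; lra).
    rewrite Hint by lra. ring. }
  assert (R1 : Rabs (a + s - a) < d1) by (rewrite Rabs_right; lra).
  assert (R2 : Rabs (b - s - b) < d2) by (rewrite Rabs_left; lra).
  assert (R3 : Rabs (a + s - a) < d3) by (rewrite Rabs_right; lra).
  assert (R4 : Rabs (b - s - b) < d4) by (rewrite Rabs_left; lra).
  specialize (H1 _ R1). specialize (H2 _ R2). specialize (H3 _ R3). specialize (H4 _ R4).
  replace (Fc b - Fc a - (H b - H a)) with
    (- (Fc (b - s) - Fc b) + (Fc (a + s) - Fc a) + (H (b - s) - H b) - (H (a + s) - H a)
     + (Fc (b - s) - Fc (a + s) - (H (b - s) - H (a + s)))) by ring.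
  rewrite Z, Rplus_0_r.
  unfold Rminus at 1.
  eapply Rle_lt_trans. apply Rabs_triang. rewrite Rabs_Ropp.
  eapply Rle_lt_trans. apply Rplus_le_compat_r. apply Rabs_triang.
  eapply Rle_lt_trans. apply Rplus_le_compat_r. apply Rplus_le_compat_r. apply Rabs_triang.
  rewrite Rabs_Ropp. lra.
Qed.

Lemma cont_on_mult a b F G : cont_on a b F -> cont_on a b G -> cont_on a b (fun x => F x * G x).
Proof.
  intros HF HG x Hx. eapply filterlim_comp_2; [apply (HF x Hx) | apply (HG x Hx) |].
  apply (filterlim_mult (K := R_AbsRing) (F x) (G x)).
Qed.

Lemma cont_on_plus a b F G : cont_on a b F -> cont_on a b G -> cont_on a b (fun x => F x + G x).
Proof.
  intros HF HG x Hx. eapply filterlim_comp_2; [apply (HF x Hx) | apply (HG x Hx) |].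
  apply (filterlim_plus (K := R_AbsRing) (V := R_NormedModule) (F x) (G x)).
Qed.

Lemma cont_on_const a b c : cont_on a b (fun _ => c).
Proof. intros x Hx. apply filterlim_const. Qed.

Lemma cont_on_minus a b F G : cont_on a b F -> cont_on a b G -> cont_on a b (fun x => F x - G x).
Proof.
  intros HF HG. unfold Rminus.
  assert (cont_on a b (fun x => -1 * G x)) by (apply cont_on_mult; auto; apply cont_on_const).
  eapply eps_cont_on. intros x Hx eps He.
  destruct (cont_on_eps _ _ _ (cont_on_plus a b F _ HF H) x Hx eps He) as [d [Hd Hy]].
  exists d; split; auto. intros y Hyi Hyx. specialize (Hy y Hyi Hyx).
  replace (F y + - G y - (F x + - G x)) with (F y + -1 * G y - (F x + -1 * G x)) by ring. exact Hy.
Qed.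

Lemma cont_on_ex_RInt a b F : a <= b -> cont_on a b F -> ex_RInt F a b.
Proof.
  intros Hab HF. apply ex_RInt_ext with (fun y => F (clamp a b y)).
  intros x Hx. rewrite Rmin_left in Hx by lra. rewrite Rmax_right in Hx by lra.
  rewrite clamp_id; auto. unfold Icc; lra.
  apply (ex_RInt_continuous (V := R_CompleteNormedModule)). intros. apply cont_on_clamp; auto.
Qed.

Lemma sum_range_S m g : sum_range (S m) g = sum_range m g + g m.
Proof.
  unfold sum_range. rewrite seq_S, map_app, fold_right_app. simpl.
  generalize (g m). intro r. induction (map g (seq 0 m)); simpl. ring. rewrite IHl. ring.
Qed.

Lemma sum_range_ext m g h : (forall j, (j < m)%nat -> g j = h j) -> sum_range m g = sum_range m h.
Proof.
  induction m; intros H. reflexivity. rewrite !sum_range_S. rewrite IHm by (intros; apply H; lia).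
  rewrite H by lia. reflexivity.
Qed.

Definition RI (f : R -> R) (a b : R) : R := RInt f a b.

Section IBP.
Variables (a b : R) (N : nat) (D V : nat -> R -> R).
Hypothesis hab : a < b.
Hypothesis HD : forall k, (k < N)%nat -> deriv_on a b (D k) (D (S k)).
Hypothesis HC : cont_on a b (D N).
Hypothesis HV : forall j, (j < N)%nat -> forall x, is_derive (V (S j)) x (V j x).
Hypothesis HVc : forall j, (j <= N)%nat -> forall x, continuous (V j) x.

Lemma D_cont k : (k <= N)%nat -> cont_on a b (D k).
Proof.
  intros Hk. destruct (Nat.eq_dec k N) as [->|]. exact HC. apply deriv_on_cont with (D (S k)). apply HD; lia.
Qed.

Lemma V_cont j : (j <= N)%nat -> cont_on a b (V j).
Proof. intros. apply cont_cont_on. apply HVc; auto. Qed.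

Lemma prod_ex j : (j <= N)%nat -> ex_RInt (fun x => V j x * D j x) a b.
Proof. intros. apply cont_on_ex_RInt. lra. apply cont_on_mult. apply V_cont; auto. apply D_cont; auto. Qed.

Lemma IBP_step j : (j < N)%nat ->
  RI (fun x => V j x * D j x) a b =
  (V (S j) b * D j b - V (S j) a * D j a) - RI (fun x => V (S j) x * D (S j) x) a b.
Proof.
  intros Hj.
  destruct (ftc_gen a b (fun x => V (S j) x * D j x) (fun x => V j x * D j x + V (S j) x * D (S j) x) hab)
    as [_ Hf].
  - apply cont_on_mult. apply V_cont; lia. apply D_cont; lia.
  - apply cont_on_plus; apply cont_on_mult; try apply V_cont; try apply D_cont; lia.
  - intros x Hx. 
    pose proof (is_derive_mult (V (S j)) (D j) x (V j x) (D (S j) x) (HV j Hj x)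
      (deriv_on_interior a b _ _ x (HD j Hj) Hx) ltac:(intros; apply Rmult_comm)) as Hm.
    eapply is_derive_ext; [| apply Hm]. intros; reflexivity. 
  - assert (RP := RInt_plus (V:=R_CompleteNormedModule) (fun x => V j x * D j x)
        (fun x => V (S j) x * D (S j) x) a b (prod_ex j ltac:(lia)) (prod_ex (S j) ltac:(lia))).
    assert (RP' : @eq R (RInt (fun x => V j x * D j x + V (S j) x * D (S j) x) a b)
      (RInt (fun x => V j x * D j x) a b + RInt (fun x => V (S j) x * D (S j) x) a b)) by exact RP.
    unfold RI. lra.
Qed.

Lemma IBP_iter m : (m <= N)%nat ->
  RI (fun x => V 0 x * D 0 x) a b =
  sum_range m (fun j => (-1) ^ j * (V (S j) b * D j b - V (S j) a * D j a))
  + (-1) ^ m * RI (fun x => V m x * D m x) a b.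
Proof.
  induction m; intros Hm.
  - unfold sum_range. cbn [seq map fold_right pow]. ring.
  - rewrite IHm by lia. rewrite sum_range_S. rewrite IBP_step by lia. cbn [pow]. ring.
Qed.
End IBP.

Fixpoint Ud (m : nat) : nat -> R -> R :=
  match m with
  | O => fun j x => match j with O => 1 | _ => 0 end
  | S m' => match m' with
    | O => fun j x => match j with O => 2 * x | 1%nat => 2 | _ => 0 end
    | S m'' => fun j x => 2 * x * Ud m' j x + 2 * INR j * Ud m' (pred j) x - Ud m'' j x
    end
  end.

Lemma Ud_SS m j x : Ud (S (S m)) j x = 2 * x * Ud (S m) j x + 2 * INR j * Ud (S m) (pred j) x - Ud m j x.
Proof. reflexivity. Qed.

Lemma is_derive_eq (f : R -> R) x l l' : is_derive f x l -> l = l' -> is_derive f x l'.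
Proof. intros H ->; exact H. Qed.

Lemma isd_const (c x : R) : is_derive (fun _ : R => c) x 0.
Proof. apply (is_derive_const (K := R_AbsRing) (V := R_NormedModule)). Qed.

Lemma isd_id (x : R) : is_derive (fun t : R => t) x 1.
Proof. apply (is_derive_id (K := R_AbsRing)). Qed.

Lemma two_step (P : nat -> Prop) : P 0%nat -> P 1%nat -> (forall m, P m -> P (S m) -> P (S (S m))) -> forall m, P m.
Proof.
  intros H0 H1 HS m. assert (P m /\ P (S m)). { induction m. auto. destruct IHm. split; auto. }
  tauto.
Qed.

Lemma Ud_deriv m j x : is_derive (Ud m j) x (Ud m (S j) x).
Proof.
  revert m j x. apply (two_step (fun m => forall j x, is_derive (Ud m j) x (Ud m (S j) x))).
  - intros j x. simpl. destruct j; apply isd_const.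
  - intros j x. simpl. destruct j as [|[|j]].
    + apply is_derive_eq with (2 * 1). apply is_derive_scal. apply isd_id. simpl. ring.
    + apply isd_const.
    + apply isd_const.
  - intros m IH0 IH1 j x.
    assert (Hx : is_derive (fun y => 2 * y) x 2).
    { apply is_derive_eq with (2 * 1). apply is_derive_scal. apply isd_id. simpl. ring. }
    pose proof (is_derive_mult (fun y => 2 * y) (Ud (S m) j) x 2 (Ud (S m) (S j) x) Hx (IH1 j x)
      ltac:(intros; apply Rmult_comm)) as H1.
    pose proof (is_derive_scal (Ud (S m) (pred j)) x (2 * INR j) _ (IH1 (pred j) x)) as H2.
    pose proof (is_derive_plus _ _ x _ _ H1 H2) as H3.
    pose proof (is_derive_minus _ _ x _ _ H3 (IH0 j x)) as H4.
    eapply is_derive_ext; [| eapply is_derive_eq; [exact H4|]].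
    + intros t. rewrite Ud_SS. reflexivity.
    + rewrite Ud_SS. unfold minus, plus, opp, mult; simpl.
      destruct j. simpl. ring. simpl pred. rewrite S_INR. ring.
Qed.

Lemma Ud_cont m j x : continuous (Ud m j) x.
Proof. apply (ex_derive_continuous (K := R_AbsRing) (V := R_NormedModule)). eexists. apply Ud_deriv. Qed.

Lemma Ud_zero m j x : (m < j)%nat -> Ud m j x = 0.
Proof.
  revert m j. apply (two_step (fun m => forall j, (m < j)%nat -> Ud m j x = 0)).
  - intros j Hj. destruct j. lia. reflexivity.
  - intros j Hj. destruct j as [|[|j]]; try lia. reflexivity.
  - intros m IH0 IH1 j Hj. rewrite Ud_SS. rewrite IH0, IH1 by lia.
    destruct j. lia. simpl pred. rewrite IH1 by lia. ring.
Qed.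

Lemma Ud_top m x : Ud m m x = 2 ^ m * INR (fact m).
Proof.
  revert m. apply (two_step (fun m => Ud m m x = 2 ^ m * INR (fact m))).
  - simpl. ring.
  - simpl. ring.
  - intros m IH0 IH1. rewrite Ud_SS. rewrite (Ud_zero (S m)) by lia. rewrite (Ud_zero m) by lia.
    simpl pred. rewrite IH1. replace (fact (S (S m))) with ((S (S m)) * fact (S m))%nat by reflexivity.
    rewrite mult_INR. simpl pow. rewrite !S_INR. ring.
Qed.

Lemma pow_m1_S k : (-1) ^ (S k) = - (-1) ^ k.
Proof. simpl. ring. Qed.

Lemma Ud_sym m j x : Ud m j (- x) = (-1) ^ (m + j) * Ud m j x.
Proof.
  revert m j. apply (two_step (fun m => forall j, Ud m j (- x) = (-1) ^ (m + j) * Ud m j x)).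
  - intros j. destruct j; simpl; ring.
  - intros j. destruct j as [|[|j]]; simpl; ring.
  - intros m IH0 IH1 j. rewrite !Ud_SS. rewrite IH0, IH1.
    destruct j.
    + simpl pred. simpl INR. replace (S (S m) + 0)%nat with (S (S (m + 0))) by lia.
      replace (S m + 0)%nat with (S (m + 0)) by lia. rewrite !pow_m1_S. ring.
    + simpl pred. rewrite IH1. replace (S (S m) + S j)%nat with (S (S (m + S j))) by lia.
      replace (S m + S j)%nat with (S (m + S j)) by lia. replace (S m + j)%nat with (m + S j)%nat by lia.
      rewrite !pow_m1_S. ring.
Qed.

Lemma Ud_trig m t : Ud m 0 (cos t) * sin t = sin (INR (S m) * t).
Proof.
  revert m. apply (two_step (fun m => Ud m 0 (cos t) * sin t = sin (INR (S m) * t))).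
  - simpl. rewrite !Rmult_1_l. reflexivity.
  - replace (INR 2 * t) with (2 * t) by (simpl; ring). rewrite sin_2a. simpl. ring.
  - intros m IH0 IH1. rewrite Ud_SS. simpl pred. simpl INR at 1.
    transitivity (2 * cos t * (Ud (S m) 0 (cos t) * sin t) - Ud m 0 (cos t) * sin t). ring.
    rewrite IH0. rewrite IH1. rewrite !S_INR.
    replace ((INR m + 1 + 1 + 1) * t) with ((INR m + 1 + 1) * t + t) by ring.
    replace ((INR m + 1) * t) with ((INR m + 1 + 1) * t - t) by ring.
    rewrite sin_plus, sin_minus. ring.
Qed.

Fixpoint Bn (N k : nat) : R :=
  match N, k with
  | O, O => 1
  | O, S _ => 0
  | S N', O => 1
  | S N', S k' => Bn N' k' + Bn N' (S k')
  end.

Lemma Bn_zero N k : (N < k)%nat -> Bn N k = 0.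
Proof.
  revert k; induction N; intros k Hk; destruct k; try lia; simpl; auto.
  rewrite !IHN by lia. ring.
Qed.

Lemma Bn_1 N : Bn N 1 = INR N.
Proof. induction N. reflexivity. simpl. rewrite IHN. destruct N; simpl; ring. Qed.

Lemma Bn_fact N k : (k <= N)%nat -> Bn N k = INR (fact N) / (INR (fact k) * INR (fact (N - k))).
Proof.
  revert k; induction N; intros k Hk.
  - destruct k; try lia. simpl. field.
  - destruct k.
    + simpl Bn. rewrite ?Nat.sub_0_r. simpl (fact 0). simpl (INR 1). rewrite Rmult_1_l. unfold Rdiv. rewrite Rinv_r. reflexivity. apply INR_fact_neq_0.
    + simpl Bn. destruct (Nat.eq_dec k N) as [->|Hne].
      * rewrite (Bn_zero N (S N)) by lia. rewrite IHN by lia. rewrite Nat.sub_diag.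
        replace (S N - S N)%nat with 0%nat by lia. change (fact 0) with 1%nat. field. repeat split; try apply INR_fact_neq_0; simpl; lra.
      * rewrite !IHN by lia. replace (S N - S k)%nat with (N - k)%nat by lia.
        replace (N - k)%nat with (S (N - S k)) by lia.
        replace (fact (S N)) with (S N * fact N)%nat by reflexivity.
        replace (fact (S k)) with (S k * fact k)%nat by reflexivity.
        replace (fact (S (N - S k))) with (S (N - S k) * fact (N - S k))%nat by reflexivity.
        rewrite !mult_INR. replace (INR (S N)) with (INR (S k) + INR (S (N - S k))).
        field. repeat split; try apply INR_fact_neq_0; apply not_0_INR; lia.
        rewrite <- plus_INR. f_equal. lia.
Qed.

Lemma Bn_step N k : Bn (S (S N)) (S (S (S k))) = 2 * Bn (S N) (S (S (S k))) - Bn N (S (S (S k))) + Bn N (S k).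
Proof. simpl Bn at 1. simpl Bn at 2. simpl Bn at 2. simpl. ring. Qed.

Lemma Ud_one m j : Ud m j 1 = 2 ^ j * INR (fact j) * Bn (m + j + 1) (2 * j + 1).
Proof.
  revert m j. apply (two_step (fun m => forall j, Ud m j 1 = 2 ^ j * INR (fact j) * Bn (m + j + 1) (2 * j + 1))).
  - intros j. destruct j. simpl. ring. simpl Ud. rewrite Bn_zero by lia. ring.
  - intros j. destruct j as [|[|j]].
    + simpl. ring.
    + simpl. ring.
    + simpl Ud. rewrite Bn_zero by lia. ring.
  - intros m IH0 IH1 j. rewrite Ud_SS. rewrite IH0, IH1. destruct j.
    + simpl pred. rewrite !Nat.add_0_r. simpl (2 * 0 + 1)%nat. rewrite !Bn_1. rewrite !plus_INR, !S_INR. simpl. ring.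
    + simpl pred. rewrite IH1.
      replace (S (S m) + S j + 1)%nat with (S (S (S (m + j + 1)))) by lia.
      replace (S m + S j + 1)%nat with (S (S (m + j + 1))) by lia.
      replace (m + S j + 1)%nat with (S (m + j + 1)) by lia.
      replace (S m + j + 1)%nat with (S (m + j + 1)) by lia.
      replace (2 * S j + 1)%nat with (S (S (S (2 * j)))) by lia.
      replace (2 * j + 1)%nat with (S (2 * j)) by lia.
      rewrite (Bn_step (S (m + j + 1))). replace (fact (S j)) with (S j * fact j)%nat by reflexivity.
      rewrite mult_INR. simpl pow. ring.
Qed.

Definition C0 (n : nat) (a b : R) : R := (b - a) ^ (n - 1) / (4 ^ (n - 1) * INR (fact (n - 1))).
Definition k0 (a b : R) : R := 2 / (b - a).
Definition xt (a b t : R) : R := (2 * t - a - b) / (b - a).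
Definition W (n : nat) (a b : R) (j : nat) (t : R) : R :=
  C0 n a b * k0 a b ^ (n - 1 - j) * Ud (n - 1) (n - 1 - j) (xt a b t).

Lemma xt_deriv a b t : a < b -> is_derive (xt a b) t (k0 a b).
Proof. intros. unfold xt, k0. auto_derive. auto. field. lra. Qed.

Lemma W_deriv n a b j t : a < b -> (j < n - 1)%nat -> is_derive (W n a b (S j)) t (W n a b j t).
Proof.
  intros Hab Hj. unfold W.
  pose proof (is_derive_comp (Ud (n - 1) (n - 1 - S j)) (xt a b) t _ _ (Ud_deriv _ _ _) (xt_deriv a b t Hab)) as H.
  pose proof (is_derive_scal _ t (C0 n a b * k0 a b ^ (n - 1 - S j)) _ H) as H2.
  assert (E : C0 n a b * k0 a b ^ (n - 1 - j) * Ud (n - 1) (n - 1 - j) (xt a b t) =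
    C0 n a b * k0 a b ^ (n - 1 - S j) * (k0 a b * Ud (n - 1) (S (n - 1 - S j)) (xt a b t))).
  { replace (S (n - 1 - S j)) with (n - 1 - j)%nat by lia.
    replace (n - 1 - j)%nat with (S (n - 1 - S j)) at 1 by lia. simpl pow. ring. }
  rewrite E. exact H2.
Qed.

Lemma W_cont n a b j t : a < b -> continuous (W n a b j) t.
Proof.
  intros Hab. apply (ex_derive_continuous (K := R_AbsRing) (V := R_NormedModule)). unfold W.
  eexists. apply is_derive_scal. apply (is_derive_comp (Ud (n - 1) (n - 1 - j)) (xt a b) t _ _ (Ud_deriv _ _ _) (xt_deriv a b t Hab)).
Qed.

Lemma W_0 n a b t : a < b -> W n a b 0 t = 1.
Proof.
  intros Hab. unfold W, C0, k0. rewrite Nat.sub_0_r. rewrite Ud_top.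
  unfold Rdiv. rewrite Rpow_mult_distr, pow_inv.
  replace 4 with (2 * 2) by ring. rewrite Rpow_mult_distr.
  assert (0 < (b - a) ^ (n - 1)) by (apply pow_lt; lra).
  assert (0 < 2 ^ (n - 1)) by (apply pow_lt; lra).
  field. repeat split; try lra. apply INR_fact_neq_0.
Qed.

Lemma xt_b a b : a < b -> xt a b b = 1.
Proof. intros. unfold xt. field. lra. Qed.
Lemma xt_a a b : a < b -> xt a b a = Ropp 1.
Proof. intros. unfold xt. field. lra. Qed.

Lemma pow_m1_even k : (-1) ^ (k + k) = 1.
Proof. rewrite pow_add. rewrite <- Rpow_mult_distr. replace (-1 * -1) with 1 by ring. apply pow1. Qed.

Lemma W_a n a b j : a < b -> (j <= n - 1)%nat -> W n a b j a = (-1) ^ j * W n a b j b.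
Proof.
  intros Hab Hj. unfold W. rewrite xt_a, xt_b by auto. rewrite Ud_sym.
  replace (n - 1 + (n - 1 - j))%nat with (j + ((n - 1 - j) + (n - 1 - j)))%nat by lia.
  rewrite pow_add, pow_m1_even. ring.
Qed.

Lemma W_b n a b j : a < b -> (j < n - 1)%nat -> W n a b (S j) b = coef n a b j / INR (fact (n - 1)).
Proof.
  intros Hab Hj. unfold W, coef, C0, k0. rewrite xt_b by auto. rewrite Ud_one.
  set (i := (n - 1 - S j)%nat).
  assert (Hn : n = S (S (j + i))) by (unfold i; lia).
  rewrite Bn_fact by lia.
  replace (n - 1 + i + 1 - (2 * i + 1))%nat with (S j) by lia.
  replace (n - 1 + i + 1)%nat with (2 * n - j - 2)%nat by lia.
  replace (n - j - 1)%nat with (S i) by lia.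
  replace (2 * n - 2 * j - 2)%nat with (S (2 * i + 1)) by lia.
  replace (n - 1)%nat with (j + 1 + i)%nat by lia.
  replace (j + 1)%nat with (S j) by lia.
  replace (fact (S (2 * i + 1))) with (S (2 * i + 1) * fact (2 * i + 1))%nat by reflexivity.
  replace (fact (S i)) with (S i * fact i)%nat by reflexivity.
  rewrite !mult_INR.
  replace (2 * S j + 1)%nat with (S j + S j + 1)%nat by lia.
  rewrite !pow_add. unfold Rdiv. rewrite Rpow_mult_distr, pow_inv.
  replace 4 with (2 * 2) by ring. rewrite !Rpow_mult_distr.
  replace (INR (S (2 * i + 1))) with (2 * INR (S i)) by (rewrite !S_INR, plus_INR, mult_INR; simpl; ring).
  assert (0 < (b - a) ^ i) by (apply pow_lt; lra).
  assert (0 < (b - a) ^ (S j)) by (apply pow_lt; lra).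
  assert (0 < 2 ^ i) by (apply pow_lt; lra).
  assert (0 < 2 ^ (S j)) by (apply pow_lt; lra).
  assert (INR (S i) <> 0) by (apply not_0_INR; lia).
  replace (2 * j)%nat with (j + j)%nat by lia. rewrite pow_add.
  change (2 ^ S j) with (2 * 2 ^ j). change (2 ^ 1) with (2 * 1).
  assert (0 < 2 ^ j) by (apply pow_lt; lra).
  field. repeat split; try lra; try apply INR_fact_neq_0.
Qed.

Lemma cos_nPI m : cos (INR m * PI) = (-1) ^ m.
Proof.
  induction m. simpl. rewrite Rmult_0_l. apply cos_0.
  rewrite S_INR. replace ((INR m + 1) * PI) with (INR m * PI + PI) by ring.
  rewrite cos_plus, cos_PI, sin_PI, IHm. simpl. ring.
Qed.

Lemma sin_nPI m : sin (INR m * PI) = 0.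
Proof.
  induction m. simpl. rewrite Rmult_0_l. apply sin_0.
  rewrite S_INR. replace ((INR m + 1) * PI) with (INR m * PI + PI) by ring.
  rewrite sin_plus, cos_PI, sin_PI, IHm. ring.
Qed.

Lemma sin_int n : (1 <= n)%nat -> is_RInt (fun t => sin (INR n * t)) 0 PI ((1 - (-1) ^ n) / INR n).
Proof.
  intros Hn. assert (Hn0 : INR n <> 0) by (apply not_0_INR; lia).
  assert (H := is_RInt_derive (fun t => - cos (INR n * t) / INR n) (fun t => sin (INR n * t)) 0 PI).
  replace ((1 - (-1) ^ n) / INR n) with (minus (- cos (INR n * PI) / INR n) (- cos (INR n * 0) / INR n)).
  apply H.
  - intros x _. auto_derive. auto. field. auto.
  - intros x _. apply (ex_derive_continuous (K := R_AbsRing) (V := R_NormedModule)). auto_derive. auto.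
  - unfold minus, plus, opp; simpl. lazymatch goal with |- ?x = ?y => change (@eq R x y) end. rewrite Rmult_0_r, cos_0, cos_nPI. field. auto.
Qed.

Lemma pow_m1_sq m : (-1) ^ m * (-1) ^ m = 1.
Proof. rewrite <- pow_add. apply pow_m1_even. Qed.

Lemma abs_sin_piece n m : (1 <= n)%nat ->
  is_RInt (fun t => Rabs (sin (INR n * t))) (INR m * PI / INR n) (INR (S m) * PI / INR n) (2 / INR n).
Proof.
  intros Hn. assert (Hn0 : 0 < INR n) by (apply lt_0_INR; lia).
  apply is_RInt_ext with (fun t => (-1) ^ m * sin (INR n * t)).
  { intros x Hx. change (@eq R ((-1)^m * sin (INR n * x)) (Rabs (sin (INR n * x)))).
    rewrite Rmin_left in Hx. rewrite Rmax_right in Hx.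
    2,3: apply Rmult_le_compat_r; [left; apply Rinv_0_lt_compat; auto|]; apply Rmult_le_compat_r;
      [left; apply PI_RGT_0| rewrite S_INR; lra].
    set (u := INR n * x - INR m * PI).
    assert (Hu : 0 < u < PI).
    { unfold u. destruct Hx as [H1 H2]. rewrite S_INR in H2.
      apply (Rmult_lt_compat_l (INR n)) in H1; auto. apply (Rmult_lt_compat_l (INR n)) in H2; auto.
      replace (INR n * (INR m * PI / INR n)) with (INR m * PI) in H1 by (field; lra).
      replace (INR n * ((INR m + 1) * PI / INR n)) with (INR m * PI + PI) in H2 by (field; lra). lra. }
    replace (INR n * x) with (u + INR m * PI) by (unfold u; ring).
    rewrite sin_plus, sin_nPI, cos_nPI. rewrite Rmult_0_r, Rplus_0_r.
    rewrite Rabs_mult, pow_1_abs, Rmult_1_r. rewrite Rabs_right.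
    2: { left. apply sin_gt_0; lra. }
    rewrite Rmult_comm, Rmult_assoc, pow_m1_sq. ring. }
  assert (H := is_RInt_derive (fun t => - (-1) ^ m * cos (INR n * t) / INR n)
     (fun t => (-1) ^ m * sin (INR n * t)) (INR m * PI / INR n) (INR (S m) * PI / INR n)).
  replace (2 / INR n) with (minus (- (-1) ^ m * cos (INR n * (INR (S m) * PI / INR n)) / INR n)
     (- (-1) ^ m * cos (INR n * (INR m * PI / INR n)) / INR n)).
  apply H.
  - intros x _. auto_derive. auto. field. lra.
  - intros x _. apply (ex_derive_continuous (K := R_AbsRing) (V := R_NormedModule)). auto_derive. auto.
  - replace (INR n * (INR (S m) * PI / INR n)) with (INR (S m) * PI) by (field; lra).
    replace (INR n * (INR m * PI / INR n)) with (INR m * PI) by (field; lra).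
    rewrite !cos_nPI.
    unfold minus, plus, opp; simpl. lazymatch goal with |- ?x = ?y => change (@eq R x y) end.
    assert (Hp := pow_m1_sq m). set (p := (-1) ^ m) in *.
    transitivity (2 * (p * p) / INR n). field; lra. rewrite Hp. field; lra.
Qed.

Lemma abs_sin_upto n m : (1 <= n)%nat ->
  is_RInt (fun t => Rabs (sin (INR n * t))) 0 (INR m * PI / INR n) (2 * INR m / INR n).
Proof.
  intros Hn. induction m.
  - simpl. replace (0 * PI / INR n) with 0 by (field; apply not_0_INR; lia).
    replace (2 * 0 / INR n) with (@zero R_NormedModule) by (unfold zero; simpl; field; apply not_0_INR; lia).
    apply is_RInt_point.
  - replace (2 * INR (S m) / INR n) with (plus (2 * INR m / INR n) (2 / INR n)).
    eapply (is_RInt_Chasles (V := R_NormedModule)). exact IHm. apply abs_sin_piece; auto.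
    rewrite S_INR. unfold plus; simpl. field. apply not_0_INR; lia.
Qed.

Lemma abs_sin_int n : (1 <= n)%nat -> is_RInt (fun t => Rabs (sin (INR n * t))) 0 PI 2.
Proof.
  intros Hn. pose proof (abs_sin_upto n n Hn) as H.
  assert (INR n <> 0) by (apply not_0_INR; lia).
  replace (INR n * PI / INR n) with PI in H by (field; auto).
  replace (2 * INR n / INR n) with 2 in H by (field; auto). exact H.
Qed.

Definition gth (a b th : R) : R := (a + b) / 2 + (b - a) / 2 * cos th.

Lemma xt_gth (a b u : R) : a < b -> xt a b (gth a b u) = cos u.
Proof. intros. unfold xt, gth. field. lra. Qed.

Lemma W_last n a b t : W n a b (n - 1) t = C0 n a b * Ud (n - 1) 0 (xt a b t).
Proof. unfold W. rewrite Nat.sub_diag. simpl. ring. Qed.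

Lemma C0_pos n a b : a < b -> 0 < C0 n a b.
Proof.
  intros. unfold C0. apply Rdiv_lt_0_compat. apply pow_lt; lra.
  apply Rmult_lt_0_compat. apply pow_lt; lra. apply lt_0_INR. apply lt_O_fact.
Qed.

Lemma comp_int (f : R -> R) a b : a < b -> (forall x, continuous f x) ->
  is_RInt (fun th => (- ((b - a) / 2) * sin th) * f (gth a b th)) 0 PI (RInt f b a).
Proof.
  intros Hab Hf.
  assert (H := is_RInt_comp f (gth a b) (fun th => - ((b - a) / 2) * sin th) 0 PI).
  assert (E1 : gth a b 0 = b) by (unfold gth; rewrite cos_0; field).
  assert (E2 : gth a b PI = a) by (unfold gth; rewrite cos_PI; field).
  rewrite E1, E2 in H. apply H.
  - intros; apply Hf.
  - intros x _. split. unfold gth. auto_derive. auto. ring.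
    apply (ex_derive_continuous (K := R_AbsRing) (V := R_NormedModule)). auto_derive. auto.
Qed.

Lemma RI_W_last n a b : (1 <= n)%nat -> a < b ->
  RI (W n a b (n - 1)) a b = (b - a) / 2 * C0 n a b * ((1 - (-1) ^ n) / INR n).
Proof.
  intros Hn Hab. set (f := W n a b (n - 1)).
  assert (Hf : forall x, continuous f x) by (intros; apply W_cont; auto).
  set (k := - ((b - a) / 2) * C0 n a b).
  assert (H1 := comp_int f a b Hab Hf).
  assert (H2 := is_RInt_scal _ _ _ k _ (sin_int n Hn)).
  assert (E : RInt f b a = k * ((1 - (-1) ^ n) / INR n)).
  { rewrite <- (is_RInt_unique _ _ _ _ H1).
    transitivity (RInt (fun y => k * sin (INR n * y)) 0 PI).
    2: { apply is_RInt_unique. exact H2. }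
    apply RInt_ext. intros x _. unfold f. rewrite W_last, xt_gth by auto.
    unfold scal; simpl; unfold mult; simpl. unfold k.
    replace (INR n) with (INR (S (n - 1))) by (f_equal; lia).
    rewrite <- (Ud_trig (n - 1) x). ring. }
  unfold RI. 
  assert (Hex : ex_RInt f a b) by (apply (ex_RInt_continuous (V := R_CompleteNormedModule)); intros; apply Hf).
  rewrite <- (opp_RInt_swap f a b Hex) in E. unfold opp in E; simpl in E.
  unfold k in E. 
  assert (E' : @eq R (- RInt f a b) (- ((b - a) / 2) * C0 n a b * ((1 - (-1) ^ n) / INR n))) by exact E.
  lra.
Qed.

Lemma RI_absW_last n a b : (1 <= n)%nat -> a < b ->
  RI (fun t => Rabs (W n a b (n - 1) t)) a b = (b - a) * C0 n a b.
Proof.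
  intros Hn Hab. set (f := fun t => Rabs (W n a b (n - 1) t)).
  assert (Hf : forall x, continuous f x).
  { intros. unfold f. apply (continuous_comp (W n a b (n - 1)) Rabs). apply W_cont; auto. apply continuous_Rabs. }
  set (k := - ((b - a) / 2) * C0 n a b).
  assert (H1 := comp_int f a b Hab Hf).
  assert (H2 := is_RInt_scal _ _ _ k _ (abs_sin_int n Hn)).
  assert (E : RInt f b a = k * 2).
  { rewrite <- (is_RInt_unique _ _ _ _ H1).
    transitivity (RInt (fun y => k * Rabs (sin (INR n * y))) 0 PI).
    2: { apply is_RInt_unique. exact H2. }
    apply RInt_ext. intros x Hx. rewrite Rmin_left in Hx by (pose proof PI_RGT_0; lra).
    rewrite Rmax_right in Hx by (pose proof PI_RGT_0; lra).
    unfold f. rewrite W_last, xt_gth by auto.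
    unfold scal; simpl; unfold mult; simpl. unfold k.
    replace (INR n) with (INR (S (n - 1))) by (f_equal; lia).
    rewrite <- (Ud_trig (n - 1) x).
    assert (Hs : 0 <= sin x) by (apply sin_ge_0; lra).
    pose proof (C0_pos n a b Hab).
    rewrite Rabs_mult, (Rabs_right (C0 n a b)) by lra. rewrite Rabs_mult, (Rabs_right (sin x)) by lra. ring. }
  unfold RI. 
  assert (Hex : ex_RInt f a b) by (apply (ex_RInt_continuous (V := R_CompleteNormedModule)); intros; apply Hf).
  rewrite <- (opp_RInt_swap f a b Hex) in E. unfold opp in E; simpl in E.
  unfold k in E. 
  assert (E' : @eq R (- RInt f a b) (- ((b - a) / 2) * C0 n a b * 2)) by exact E.
  lra.
Qed.

Lemma lub_fin (E : R -> Prop) B y0 : E y0 -> (forall y, E y -> y <= B) ->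
  (forall y, E y -> y <= real (Lub_Rbar E)) /\
  (forall M, (forall y, E y -> y <= M) -> real (Lub_Rbar E) <= M).
Proof.
  intros Hy0 HB. destruct (Lub_Rbar_correct E) as [Hub Hlub].
  destruct (Lub_Rbar E) as [l| |] eqn:El.
  - split. intros y Hy. apply (Hub y Hy). intros M HM. apply (Hlub (Finite M)). intros y Hy. apply HM; auto.
  - exfalso. assert (Hx := Hlub (Finite B)). simpl in Hx. apply Hx. intros y Hy. apply HB; auto.
  - exfalso. assert (Hx := Hub y0 Hy0). simpl in Hx. exact Hx.
Qed.

Lemma cont_on_bounded a b G : a <= b -> cont_on a b G -> exists B, forall x, Icc a b x -> Rabs (G x) <= B.
Proof.
  intros Hab HG.
  destruct (continuity_ab_maj (fun x => Rabs (G (clamp a b x))) a b Hab) as [Mx [HM _]].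
  { intros c _. apply continuity_pt_filterlim.
    apply (continuous_comp (fun x => G (clamp a b x)) Rabs). apply cont_on_clamp; auto. apply continuous_Rabs. }
  exists (Rabs (G (clamp a b Mx))). intros x Hx. specialize (HM x Hx). rewrite clamp_id in HM; auto.
Qed.

Lemma sup_norm_ge a b G : a <= b -> cont_on a b G -> forall x, Icc a b x -> Rabs (G x) <= sup_norm a b G.
Proof.
  intros Hab HG x Hx. destruct (cont_on_bounded a b G Hab HG) as [B HB].
  unfold sup_norm.
  destruct (lub_fin (fun y => exists x, Icc a b x /\ y = Rabs (G x)) B (Rabs (G x))) as [H1 _].
  exists x; auto. intros y [z [Hz ->]]. apply HB; auto.
  apply H1. exists x; auto.
Qed.

Lemma sup_norm_le a b G M : a <= b -> (forall x, Icc a b x -> Rabs (G x) <= M) -> sup_norm a b G <= M.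
Proof.
  intros Hab HM. unfold sup_norm.
  destruct (lub_fin (fun y => exists x, Icc a b x /\ y = Rabs (G x)) M (Rabs (G a))) as [_ H2].
  exists a; split; auto. unfold Icc; lra. intros y [z [Hz ->]]. apply HM; auto.
  apply H2. intros y [z [Hz ->]]. apply HM; auto.
Qed.

Lemma sum_range_scal m c g : sum_range m (fun j => c * g j) = c * sum_range m g.
Proof. induction m. unfold sum_range; simpl; ring. rewrite !sum_range_S, IHm. ring. Qed.

Lemma RI_ext f g a b : a <= b -> (forall x, a < x < b -> f x = g x) -> RI f a b = RI g a b.
Proof.
  intros Hab H. unfold RI. apply RInt_ext. intros x Hx. rewrite Rmin_left in Hx by lra.
  rewrite Rmax_right in Hx by lra. apply H; auto.
Qed.

Lemma RI_plus f g a b : ex_RInt f a b -> ex_RInt g a b -> RI (fun x => f x + g x) a b = RI f a b + RI g a b.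
Proof. intros. unfold RI. apply (RInt_plus (V := R_CompleteNormedModule)); auto. Qed.

Lemma RI_scal f c a b : ex_RInt f a b -> RI (fun x => c * f x) a b = c * RI f a b.
Proof. intros. unfold RI. apply (RInt_scal (V := R_CompleteNormedModule)); auto. Qed.

Lemma pow_m1_odd k : (-1) ^ (2 * k + 1) = -1.
Proof. rewrite pow_add. replace (2 * k)%nat with (k + k)%nat by lia. rewrite pow_m1_even. simpl. ring. Qed.

Lemma pow_m1_evn k : (-1) ^ (2 * k) = 1.
Proof. replace (2 * k)%nat with (k + k)%nat by lia. apply pow_m1_even. Qed.

Section Main.
Variables (n : nat) (a b : R) (f : R -> R) (D : nat -> R -> R).
Hypothesis hn : (1 <= n)%nat.
Hypothesis hab : a < b.
Hypothesis hd : derivs_hyp n a b f D.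

Let HD0 : forall x, Icc a b x -> D 0%nat x = f x := proj1 hd.
Let HD : forall k, (k < n - 1)%nat -> deriv_on a b (D k) (D (S k)) := proj1 (proj2 hd).
Let HC : cont_on a b (D (n - 1)%nat) := proj2 (proj2 hd).

Lemma HVd : forall j, (j < n - 1)%nat -> forall x, is_derive (W n a b (S j)) x (W n a b j x).
Proof. intros. apply W_deriv; auto. Qed.
Lemma HVc : forall j, (j <= n - 1)%nat -> forall x, continuous (W n a b j) x.
Proof. intros. apply W_cont; auto. Qed.

Lemma Rterm_val : Rterm n a b D = (-1) ^ (n - 1) * D (n - 1)%nat a * RI (W n a b (n - 1)) a b.
Proof.
  rewrite RI_W_last by auto. unfold Rterm, C0.
  assert (Hn0 : INR n <> 0) by (apply not_0_INR; lia).
  destruct (Nat.odd n) eqn:Ho.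
  - apply Nat.odd_spec in Ho. destruct Ho as [k Hk].
    replace ((-1) ^ n) with (-1) by (rewrite Hk; symmetry; apply pow_m1_odd).
    replace (n - 1)%nat with (2 * k)%nat by lia. rewrite pow_m1_evn.
    replace n with (S (2 * k)) by lia. replace (2 * S (2 * k) - 2)%nat with (2 * (2 * k))%nat by lia.
    rewrite pow_mult. replace (2 ^ 2) with 4 by (simpl; ring).
    replace (fact (S (2 * k))) with (S (2 * k) * fact (2 * k))%nat by reflexivity. rewrite mult_INR.
    change ((b - a) ^ S (2 * k)) with ((b - a) * (b - a) ^ (2 * k)). replace (S (2 * k) - 1)%nat with (2 * k)%nat in * by lia.
    assert (0 < 4 ^ (2 * k)) by (apply pow_lt; lra).
    assert (INR (fact (2 * k)) <> 0) by apply INR_fact_neq_0.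
    assert (INR (S (2 * k)) <> 0) by (apply not_0_INR; lia). field. repeat split; try lra; auto.
  - assert (He : Nat.even n = true) by (rewrite <- Nat.negb_odd, Ho; reflexivity).
    apply Nat.even_spec in He. destruct He as [k Hk].
    replace ((-1) ^ n) with 1 by (rewrite Hk; symmetry; apply pow_m1_evn). field. repeat split; auto. apply INR_fact_neq_0. apply pow_nonzero; lra.
Qed.

Definition Gf (t : R) : R := D (n - 1)%nat t - D (n - 1)%nat a.

Lemma main_identity :
  En n a b f D = (-1) ^ (n - 1) * RI (fun t => W n a b (n - 1) t * Gf t) a b.
Proof.
  pose proof (IBP_iter a b (n - 1) D (W n a b) hab HD HC HVd HVc (n - 1) (le_n _)) as H.
  assert (E0 : RI f a b = RI (fun x => W n a b 0 x * D 0%nat x) a b).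
  { apply RI_ext. lra. intros x Hx. rewrite W_0, HD0 by (auto; unfold Icc; lra). ring. }
  assert (ES : sum_range (n - 1) (fun j => (-1) ^ j * (W n a b (S j) b * D j b - W n a b (S j) a * D j a))
     = 1 / INR (fact (n - 1)) * sum_range (n - 1) (fun k => coef n a b k * (D k a + (-1) ^ k * D k b))).
  { rewrite <- sum_range_scal. apply sum_range_ext. intros j Hj.
    rewrite W_a by (auto; lia). rewrite W_b by auto. rewrite pow_m1_S.
    assert (Hp := pow_m1_sq j). assert (INR (fact (n - 1)) <> 0) by apply INR_fact_neq_0.
    set (p := (-1) ^ j) in *. field_simplify; auto. 
    transitivity (coef n a b j * (p * p * D j a + p * D j b) / INR (fact (n - 1))). field; auto.
    rewrite Hp. field; auto. }
  assert (cG : cont_on a b Gf) by (apply cont_on_minus; auto; apply cont_on_const).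
  assert (cW : cont_on a b (W n a b (n - 1))) by (apply cont_cont_on; apply HVc; auto).
  assert (E1 : RI (fun x => W n a b (n - 1) x * D (n - 1)%nat x) a b =
     RI (fun t => W n a b (n - 1) t * Gf t) a b + D (n - 1)%nat a * RI (W n a b (n - 1)) a b).
  { rewrite <- RI_scal. rewrite <- RI_plus. apply RI_ext. lra. intros. unfold Gf. ring.
    apply cont_on_ex_RInt. lra. apply cont_on_mult; auto.
    apply cont_on_ex_RInt. lra. apply cont_on_mult; auto. apply cont_on_const.
    apply cont_on_ex_RInt. lra. auto. }
  unfold En. change (RInt f a b) with (RI f a b). rewrite E0, H, ES, Rterm_val, E1. ring.
Qed.

Lemma main_bound : Rabs (En n a b f D) <= alex_norm_deriv n a b D * Kn n a b.
Proof.
  rewrite main_identity. rewrite Rabs_mult, pow_1_abs, Rmult_1_l.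
  assert (cG : cont_on a b Gf) by (apply cont_on_minus; auto; apply cont_on_const).
  assert (cW : cont_on a b (W n a b (n - 1))) by (apply cont_cont_on; apply HVc; auto).
  set (Nm := alex_norm_deriv n a b D).
  assert (HG : forall x, Icc a b x -> Rabs (Gf x) <= Nm) by (intros; apply sup_norm_ge; auto; lra).
  assert (cA : cont_on a b (fun t => Rabs (W n a b (n - 1) t))).
  { apply cont_cont_on. intros. apply (continuous_comp (W n a b (n - 1)) Rabs). apply HVc; auto. apply continuous_Rabs. }
  apply Rle_trans with (RI (fun t => Rabs (W n a b (n - 1) t * Gf t)) a b).
  { apply abs_RInt_le. lra. apply cont_on_ex_RInt. lra. apply cont_on_mult; auto. }
  apply Rle_trans with (RI (fun t => Nm * Rabs (W n a b (n - 1) t)) a b).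
  { apply RInt_le. lra.
    - apply cont_on_ex_RInt. lra. apply eps_cont_on. intros x Hx eps He.
      destruct (cont_on_eps _ _ _ (cont_on_mult _ _ _ _ cW cG) x Hx eps He) as [d [Hd Hy]].
      exists d; split; auto. intros y Hyi Hyx. specialize (Hy y Hyi Hyx).
      eapply Rle_lt_trans. apply Rabs_triang_inv2. exact Hy.
    - apply cont_on_ex_RInt. lra. apply cont_on_mult; auto. apply cont_on_const.
    - intros x Hx. rewrite Rabs_mult. rewrite Rmult_comm. apply Rmult_le_compat_r. apply Rabs_pos.
      apply HG. unfold Icc; lra. }
  rewrite RI_scal. rewrite RI_absW_last by auto. unfold Kn, C0. right.
  replace (2 * n - 2)%nat with (2 * (n - 1))%nat by lia. rewrite pow_mult.
  replace (2 ^ 2) with 4 by (simpl; ring).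
  replace ((b - a) ^ n) with ((b - a) * (b - a) ^ (n - 1)).
  field. split. apply pow_nonzero. lra. apply INR_fact_neq_0.
  rewrite tech_pow_Rmult. f_equal. lia.
  apply cont_on_ex_RInt. lra. auto.
Qed.
End Main.

Lemma sum_range_zero m g : (forall j, (j < m)%nat -> g j = 0) -> sum_range m g = 0.
Proof.
  induction m; intros H. reflexivity. rewrite sum_range_S, IHm, H by (auto; lia). ring.
Qed.

Lemma Derive_n_zero_loc (psi : R -> R) k x (e : posreal) :
  (forall t, Rabs (t - x) < e -> psi t = 0) -> Derive_n psi k x = 0.
Proof.
  intros H. rewrite (Derive_n_ext_loc psi (fun _ => 0) k x).
  destruct k. reflexivity. apply Derive_n_const.
  exists e. intros t Ht. apply H. apply ball_R in Ht. exact Ht.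
Qed.

Lemma in_Ac_part n a b f D : (1 <= n)%nat -> a < b -> derivs_hyp n a b f D ->
  in_Ac a b (distr_deriv n a b f).
Proof.
  intros hn hab hd. destruct hd as [HD0 [HD HC]] eqn:Ehd.
  exists (Gf n a D). split; [|split].
  - apply cont_on_minus; auto. apply cont_on_const.
  - unfold Gf. ring.
  - intros psi [Hder [c [d [Hac [Hcd [Hdb Hz]]]]]].
    set (V := fun j => Derive_n psi (n - j)).
    assert (HV : forall j, (j < n - 1)%nat -> forall x, is_derive (V (S j)) x (V j x)).
    { intros j Hj x. unfold V. replace (n - j)%nat with (S (n - S j)) by lia.
      apply Derive_correct. apply (Hder (S (n - S j)) x). }
    assert (HVc : forall j, (j <= n - 1)%nat -> forall x, continuous (V j) x).
    { intros j Hj x. apply (ex_derive_continuous (K := R_AbsRing) (V := R_NormedModule)).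
      apply (Hder (S (n - j)) x). }
    assert (Ha0 : forall k, Derive_n psi k a = 0).
    { intros k. assert (Hp : 0 < c - a) by lra. apply (Derive_n_zero_loc psi k a (mkposreal _ Hp)).
      intros t Ht. simpl in Ht. apply Hz. left. unfold Rabs in Ht; destruct Rcase_abs; lra. }
    assert (Hb0 : forall k, Derive_n psi k b = 0).
    { intros k. assert (Hp : 0 < b - d) by lra. apply (Derive_n_zero_loc psi k b (mkposreal _ Hp)).
      intros t Ht. simpl in Ht. apply Hz. right. unfold Rabs in Ht; destruct Rcase_abs; lra. }
    pose proof (IBP_iter a b (n - 1) D V hab HD HC HV HVc (n - 1) (le_n _)) as H.
    rewrite sum_range_zero in H.
    2: { intros j _. unfold V. rewrite Ha0, Hb0. ring. }
    assert (E0 : RInt (fun x => f x * Derive_n psi n x) a b = RI (fun x => V 0%nat x * D 0%nat x) a b).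
    { change (RInt (fun x => f x * Derive_n psi n x) a b) with (RI (fun x => f x * Derive_n psi n x) a b).
      apply RI_ext. lra. intros x Hx. unfold V. rewrite Nat.sub_0_r, HD0 by (unfold Icc; lra). ring. }
    assert (EV : forall x, V (n - 1)%nat x = Derive psi x).
    { intros x. unfold V. replace (n - (n - 1))%nat with 1%nat by lia. reflexivity. }
    assert (Hpsi : forall x, is_derive psi x (Derive psi x)).
    { intros x. apply Derive_correct. apply (Hder 1%nat x). }
    assert (cD : forall x, continuous (Derive psi) x).
    { intros x. apply (ex_derive_continuous (K := R_AbsRing) (V := R_NormedModule)). apply (Hder 2%nat x). }
    assert (Ipsi : RI (Derive psi) a b = 0).
    { unfold RI. rewrite (is_RInt_unique _ _ _ _ (is_RInt_derive psi (Derive psi) a b (fun x _ => Hpsi x) (fun x _ => cD x))).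
      unfold minus, plus, opp; simpl. 
      assert (psi a = 0) by (apply Hz; left; lra). assert (psi b = 0) by (apply Hz; right; lra).
      rewrite H0, H1. ring. }
    assert (cDo : cont_on a b (Derive psi)) by (apply cont_cont_on; auto).
    assert (cG : cont_on a b (Gf n a D)) by (apply cont_on_minus; auto; apply cont_on_const).
    assert (E1 : RI (fun x => V (n - 1)%nat x * D (n - 1)%nat x) a b =
       RI (fun x => Gf n a D x * Derive psi x) a b + D (n - 1)%nat a * RI (Derive psi) a b).
    { rewrite <- RI_scal. rewrite <- RI_plus. apply RI_ext. lra. intros. rewrite EV. unfold Gf. ring.
      all: apply cont_on_ex_RInt; [lra|]. all: auto.
      apply cont_on_mult; auto. apply cont_on_mult; auto. apply cont_on_const. }
    unfold distr_deriv. rewrite E0, H, E1, Ipsi.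
    change (RInt (fun x => Gf n a D x * Derive psi x) a b) with (RI (fun x => Gf n a D x * Derive psi x) a b).
    assert (Hs : (-1) ^ n = - (-1) ^ (n - 1)).
    { destruct n. lia. rewrite pow_m1_S. replace (S n - 1)%nat with n by lia. reflexivity. }
    rewrite Hs.
    assert (Hp := pow_m1_sq (n - 1)). set (p := (-1) ^ (n - 1)) in *.
    transitivity (- (p * p) * RI (fun x => Gf n a D x * Derive psi x) a b). ring. rewrite Hp. ring.
Qed.

Lemma clamp_cont lo hi x : lo <= hi -> continuous (clamp lo hi) x.
Proof.
  intros H. apply cont_eps. intros eps He. exists eps. split; auto. intros y Hy.
  eapply Rle_lt_trans. apply clamp_lip; auto. auto.
Qed.

Fixpoint Iter (a : R) (g : R -> R) (m : nat) : R -> R :=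
  match m with O => g | S m' => fun x => RInt (Iter a g m') a x end.

Lemma Iter_prop a g : (forall x, continuous g x) -> forall m,
  (forall x, continuous (Iter a g m) x) /\ (forall x, is_derive (Iter a g (S m)) x (Iter a g m x)).
Proof.
  intros Hg. induction m.
  - split. exact Hg. intros x. simpl. apply (is_derive_RInt (V := R_NormedModule) g (fun y => RInt g a y) a x).
    exists (mkposreal 1 Rlt_0_1). intros y _. apply (RInt_correct (V := R_CompleteNormedModule)).
    apply (ex_RInt_continuous (V := R_CompleteNormedModule)). intros; apply Hg. apply Hg.
  - destruct IHm as [Hc Hd]. assert (Hc' : forall x, continuous (Iter a g (S m)) x).
    { intros x. apply (ex_derive_continuous (K := R_AbsRing) (V := R_NormedModule)). eexists. apply Hd. }
    split. exact Hc'. intros x.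
    apply (is_derive_RInt (V := R_NormedModule) (Iter a g (S m)) (fun y => RInt (Iter a g (S m)) a y) a x).
    exists (mkposreal 1 Rlt_0_1). intros y _. apply (RInt_correct (V := R_CompleteNormedModule)).
    apply (ex_RInt_continuous (V := R_CompleteNormedModule)). intros; apply Hc'. apply Hc'.
Qed.

Lemma RI_minus f g a b : ex_RInt f a b -> ex_RInt g a b -> RI (fun x => f x - g x) a b = RI f a b - RI g a b.
Proof. intros. unfold RI. apply (RInt_minus (V := R_CompleteNormedModule)); auto. Qed.

Lemma RI_const c a b : RI (fun _ => c) a b = (b - a) * c.
Proof. unfold RI. rewrite (RInt_const (V := R_CompleteNormedModule)). reflexivity. Qed.

Lemma clamp_prod_bounds M w : 0 < M ->
  0 <= w * clamp (-1) 1 (M * w) /\ w * clamp (-1) 1 (M * w) <= Rabs w /\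
  Rabs w - 1 / M <= w * clamp (-1) 1 (M * w).
Proof.
  intros HM. unfold clamp, Rmax, Rmin.
  assert (Hi : 1 / M * M = 1) by (field; lra).
  repeat destruct Rle_dec; unfold Rabs; destruct Rcase_abs; repeat split; try nra.
Qed.

Lemma h_bounds a dl t : 0 <= clamp 0 1 ((t - a) / dl) <= 1.
Proof. apply clamp_Icc. lra. Qed.

Lemma int_one_minus_h a b dl : 0 < dl -> dl <= b - a ->
  RI (fun t => 1 - clamp 0 1 ((t - a) / dl)) a b <= dl.
Proof.
  intros Hd Hdb. set (h := fun t => 1 - clamp 0 1 ((t - a) / dl)).
  assert (ch : forall x, continuous h x).
  { intros x. unfold h. apply (continuous_minus (V := R_NormedModule) (fun _ => 1) (fun t => clamp 0 1 ((t - a) / dl))).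
    apply continuous_const. apply (continuous_comp (fun t => (t - a) / dl) (clamp 0 1)).
    apply (ex_derive_continuous (K := R_AbsRing) (V := R_NormedModule)). auto_derive. auto.
    apply clamp_cont. lra. }
  assert (ex : forall u v, ex_RInt h u v) by (intros; apply (ex_RInt_continuous (V := R_CompleteNormedModule)); intros; apply ch).
  unfold RI. rewrite <- (RInt_Chasles h a (a + dl) b) by auto.
  assert (E2 : RInt h (a + dl) b = 0).
  { rewrite (RInt_ext h (fun _ => 0)). rewrite (RInt_const (V := R_CompleteNormedModule)).
    unfold scal; simpl; unfold mult; simpl. ring.
    intros x Hx. rewrite Rmin_left in Hx by lra. rewrite Rmax_right in Hx by lra.
    unfold h, clamp. assert (1 < (x - a) / dl).
    { apply (Rmult_lt_reg_r dl); auto. unfold Rdiv. rewrite Rmult_assoc, Rinv_l by lra. lra. }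
    unfold Rmin, Rmax. repeat destruct Rle_dec; lra. }
  assert (E1 : RInt h a (a + dl) <= dl).
  { apply Rle_trans with (RInt (fun _ => 1) a (a + dl)).
    apply RInt_le. lra. auto. apply (ex_RInt_const (V := R_CompleteNormedModule)).
    intros x _. unfold h. pose proof (h_bounds a dl x). lra.
    rewrite (RInt_const (V := R_CompleteNormedModule)). unfold scal; simpl; unfold mult; simpl. lra. }
  unfold plus; simpl.
  assert (E2' : @eq R (RInt h (a + dl) b) 0) by exact E2. 
  assert (E1' : (RInt h a (a + dl) : R) <= dl) by exact E1.
  lra.
Qed.

Lemma Kn_eq n a b : (1 <= n)%nat -> a < b -> (b - a) * C0 n a b = Kn n a b.
Proof.
  intros hn hab. unfold Kn, C0.
  replace (2 * n - 2)%nat with (2 * (n - 1))%nat by lia. rewrite pow_mult.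
  replace (2 ^ 2) with 4 by (simpl; ring).
  replace ((b - a) ^ n) with ((b - a) * (b - a) ^ (n - 1)).
  field. split. apply pow_nonzero. lra. apply INR_fact_neq_0.
  rewrite tech_pow_Rmult. f_equal. lia.
Qed.

Lemma Kn_pos n a b : a < b -> 0 < Kn n a b.
Proof.
  intros. unfold Kn. apply Rdiv_lt_0_compat. apply pow_lt; lra.
  apply Rmult_lt_0_compat. apply lt_0_INR, lt_O_fact. apply pow_lt; lra.
Qed.

Lemma sharp n a b : (1 <= n)%nat -> a < b -> forall c, c < Kn n a b ->
  exists (f : R -> R) (D : nat -> R -> R), derivs_hyp n a b f D /\
    Rabs (En n a b f D) > c * alex_norm_deriv n a b D.
Proof.
  intros hn hab c Hc.
  set (Wl := W n a b (n - 1)).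
  assert (cW : forall x, continuous Wl x) by (intros; apply W_cont; auto).
  destruct (cont_on_bounded a b Wl ltac:(lra) (cont_cont_on a b Wl cW)) as [B HB].
  assert (B0 : 0 <= B) by (eapply Rle_trans; [apply Rabs_pos| apply (HB a); unfold Icc; lra]).
  assert (HK := Kn_pos n a b hab).
  set (mc := Rmax c 0).
  assert (Hmc : mc < Kn n a b) by (apply Rmax_lub_lt; lra).
  set (eps := Kn n a b - mc).
  assert (He : 0 < eps) by (unfold eps; lra).
  set (M := 4 * (b - a) / eps).
  assert (HM : 0 < M) by (unfold M; apply Rdiv_lt_0_compat; lra).
  set (dl := Rmin (b - a) (eps / (4 * (B + 1)))).
  assert (Hdl : 0 < dl) by (unfold dl; apply Rmin_pos; [lra| apply Rdiv_lt_0_compat; lra]).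
  assert (Hdlb : dl <= b - a) by apply Rmin_l.
  assert (HBdl : B * dl <= eps / 4).
  { assert (dl <= eps / (4 * (B + 1))) by apply Rmin_r.
    apply Rle_trans with ((B + 1) * dl). nra.
    apply Rle_trans with ((B + 1) * (eps / (4 * (B + 1)))). apply Rmult_le_compat_l; lra.
    right. field. lra. }
  set (g := fun t => clamp 0 1 ((t - a) / dl) * clamp (-1) 1 (M * Wl t)).
  assert (cg : forall x, continuous g x).
  { intros x. unfold g. apply (continuous_mult (K := R_AbsRing)).
    apply (continuous_comp (fun t => (t - a) / dl) (clamp 0 1)).
    apply (ex_derive_continuous (K := R_AbsRing) (V := R_NormedModule)). auto_derive. lra.
    apply clamp_cont. lra.
    apply (continuous_comp (fun t => M * Wl t) (clamp (-1) 1)).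
    apply (continuous_mult (K := R_AbsRing)). apply continuous_const. apply cW.
    apply clamp_cont. lra. }
  assert (ga : g a = 0).
  { unfold g. replace ((a - a) / dl) with 0 by (field; lra).
    unfold clamp at 1, Rmax, Rmin. repeat destruct Rle_dec; lra. }
  pose proof (Iter_prop a g cg) as HI.
  exists (Iter a g (n - 1)), (fun k => Iter a g (n - 1 - k)).
  assert (Hd : derivs_hyp n a b (Iter a g (n - 1)) (fun k => Iter a g (n - 1 - k))).
  { split; [|split].
    - intros x _. rewrite Nat.sub_0_r. reflexivity.
    - intros k Hk. apply is_derive_deriv_on. intros x _.
      replace (n - 1 - k)%nat with (S (n - 1 - S k)) by lia. apply (proj2 (HI _)).
    - rewrite Nat.sub_diag. apply cont_cont_on. exact cg. }
  split; auto.
  rewrite (main_identity n a b _ _ hn hab Hd).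
  assert (EG : forall t, Gf n a (fun k => Iter a g (n - 1 - k)) t = g t).
  { intros t. unfold Gf. rewrite Nat.sub_diag. simpl. rewrite ga. ring. }
  set (Nm := alex_norm_deriv n a b (fun k => Iter a g (n - 1 - k))).
  assert (Nm1 : Nm <= 1).
  { unfold Nm, alex_norm_deriv. apply sup_norm_le. lra. intros x _.
    change (Rabs (Gf n a (fun k => Iter a g (n - 1 - k)) x) <= 1). rewrite EG.
    unfold g. rewrite Rabs_mult. pose proof (h_bounds a dl x).
    pose proof (clamp_Icc (-1) 1 (M * Wl x) ltac:(lra)). unfold Icc in *.
    apply Rle_trans with (1 * 1). apply Rmult_le_compat; try apply Rabs_pos.
    unfold Rabs; destruct Rcase_abs; lra. unfold Rabs; destruct Rcase_abs; lra. lra. }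
  assert (Nm0 : 0 <= Nm).
  { unfold Nm, alex_norm_deriv.
    assert (cGf : cont_on a b (fun x => Iter a g (n - 1 - (n - 1)) x - Iter a g (n - 1 - (n - 1)) a)).
    { apply cont_on_minus; [| apply cont_on_const]. rewrite Nat.sub_diag. apply cont_cont_on. exact cg. }
    pose proof (sup_norm_ge a b _ (Rlt_le _ _ hab) cGf a ltac:(unfold Icc; lra)) as Hs.
    pose proof (Rabs_pos (Iter a g (n - 1 - (n - 1)) a - Iter a g (n - 1 - (n - 1)) a)). lra. }
  set (hh := fun t => 1 - clamp 0 1 ((t - a) / dl)).
  assert (chh : forall x, continuous hh x).
  { intros x. unfold hh. apply (continuous_minus (V := R_NormedModule) (fun _ => 1) (fun t => clamp 0 1 ((t - a) / dl))).
    apply continuous_const. apply (continuous_comp (fun t => (t - a) / dl) (clamp 0 1)).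
    apply (ex_derive_continuous (K := R_AbsRing) (V := R_NormedModule)). auto_derive. lra.
    apply clamp_cont. lra. }
  assert (cA : forall x, continuous (fun t => Rabs (Wl t)) x).
  { intros. apply (continuous_comp Wl Rabs). apply cW. apply continuous_Rabs. }
  assert (exc : forall (F : R -> R), (forall x, continuous F x) -> ex_RInt F a b).
  { intros F HF. apply (ex_RInt_continuous (V := R_CompleteNormedModule)). intros; apply HF. }
  assert (LB : Kn n a b - eps / 2 <= RI (fun t => Wl t * Gf n a (fun k => Iter a g (n - 1 - k)) t) a b).
  { rewrite (RI_ext _ (fun t => Wl t * g t)) by (lra || (intros; rewrite EG; reflexivity)).
    apply Rle_trans with (RI (fun t => (Rabs (Wl t) - (fun _ => 1 / M) t) - B * hh t) a b).
    2: { apply RInt_le. lra.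
         - apply exc. intros x. apply (continuous_minus (V := R_NormedModule)).
           apply (continuous_minus (V := R_NormedModule)). apply cA. apply continuous_const.
           apply (continuous_mult (K := R_AbsRing)). apply continuous_const. apply chh.
         - apply exc. intros x. apply (continuous_mult (K := R_AbsRing)). apply cW. apply cg.
         - intros x Hx. unfold hh, g. simpl.
           destruct (clamp_prod_bounds M (Wl x) HM) as [P1 [P2 P3]].
           pose proof (h_bounds a dl x). pose proof (HB x ltac:(unfold Icc; lra)).
           set (X := Wl x * clamp (-1) 1 (M * Wl x)) in *.
           set (hx := clamp 0 1 ((x - a) / dl)) in *.
           replace (Wl x * (hx * clamp (-1) 1 (M * Wl x))) with (hx * X) by (unfold X; ring).
           nra. }
    rewrite RI_minus, RI_minus, RI_const, RI_scal.
    all: try (apply exc; intros x; repeat first [apply cA | apply chh | apply continuous_const |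
       apply (continuous_minus (V:=R_NormedModule)) | apply (continuous_mult (K:=R_AbsRing))]).
    unfold Wl. rewrite RI_absW_last by auto. rewrite Kn_eq by auto.
    pose proof (int_one_minus_h a b dl Hdl Hdlb) as Hh. fold hh in Hh.
    assert (B * RI hh a b <= eps / 4) by (apply Rle_trans with (B * dl); [apply Rmult_le_compat_l; auto| auto]).
    assert ((b - a) * (1 / M) = eps / 4) by (unfold M; field; lra).
    lra. }
  rewrite Rabs_mult, pow_1_abs, Rmult_1_l.
  assert (c * Nm <= mc).
  { unfold mc. destruct (Rle_dec 0 c).
    - rewrite Rmax_left by lra. nra.
    - rewrite Rmax_right by lra. nra. }
  apply Rlt_le_trans with (Kn n a b - eps / 2). unfold eps. lra.
  eapply Rle_trans. exact LB. apply Rle_abs.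
Qed.

Theorem theorem4p1 (n : nat) (a b : R) (hn : (1 <= n)%nat) (hab : a < b) :
  (forall (f : R -> R) (D : nat -> R -> R),
     derivs_hyp n a b f D ->
     in_Ac a b (distr_deriv n a b f) /\
     Rabs (En n a b f D) <= alex_norm_deriv n a b D * Kn n a b)
  /\
  (forall c : R, c < Kn n a b ->
     exists (f : R -> R) (D : nat -> R -> R),
       derivs_hyp n a b f D /\
       Rabs (En n a b f D) > c * alex_norm_deriv n a b D).
Proof.
  split.
  - intros f D Hd. split. apply (in_Ac_part n a b f D); auto. exact (main_bound n a b f D hn hab Hd).
  - apply sharp; auto.
Qed.
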